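(* Let $N\ge 1$ and $-\infty<a_i\le b_i<\infty$ with $r_i=(b_i-a_i)/2>0$ for all $i$; set $m_i=(a_i+b_i)/2$, $\Theta=\prod_{i=1}^N[a_i,b_i]$, $T(y)=\sum_{i=1}^N y_i$. Fix a sampling design $p$ with inclusion probabilities $\pi_i=\mathbb P_p(i\in S)>0$ for every $i$. Then the estimator $\widehat T(y_S)=\sum_{i=1}^N m_i+\sum_{i\in S}\frac{y_i-m_i}{\pi_i}$ is admissible in the class of unbiased estimators under squared-error loss: there is no unbiased estimator $\delta$ with $R(\delta,p;y)\le R(\widehat T,p;y)$ for all $y\in\Theta$ and strict inequality for some $y\in\Theta$.
   Context: A sampling design is a probability distribution $p$ on the subsets $s\subseteq\{1,\dots,N\}$; $S$ denotes the random sample drawn from $p$, $\mathbb P_p$ and $\mathbb E_p$ denote probability and expectation with respect to $p$. An estimator $\delta$ is a collection of measurable functions $\delta_s:\Theta_s\to\mathbb R$, one for each subset $s$, where $\Theta_s=\prod_{i\in s}[a_i,b_i]$; for $y\in\Theta$ write $y_s=(y_i)_{i\in s}$. The estimator is unbiased if $\mathbb E_p[\delta_S(y_S)]=T(y)$ for all $y\in\Theta$. The risk is $R(\delta,p;y)=\mathbb E_p[(\delta_S(y_S)-T(y))^2]$. *)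

(* Defs.v *)
From mathcomp Require Import all_boot all_order all_algebra.
From mathcomp Require Import reals.
Set Implicit Arguments. Unset Strict Implicit. Unset Printing Implicit Defensive.
Import Order.TTheory GRing.Theory Num.Theory.
Local Open Scope ring_scope.

Section Sampling.
Variables (R : realType) (N : nat).

Definition is_design (p : {set 'I_N} -> R) : Prop :=
  (forall s, 0 <= p s) /\ \sum_(s : {set 'I_N}) p s = 1.

Definition incl_prob (p : {set 'I_N} -> R) (i : 'I_N) : R :=
  \sum_(s : {set 'I_N} | i \in s) p s.

Definition inTheta (a b : 'I_N -> R) (y : 'I_N -> R) : Prop :=
  forall i, a i <= y i <= b i.

Definition total (y : 'I_N -> R) : R := \sum_i y i.

(* An estimator: for each subset s a real function of the sample data.
   It is represented as a function of y that (on Theta) depends only on y_s. *)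
Definition estimator := {set 'I_N} -> ('I_N -> R) -> R.

Definition depends_on_sample (a b : 'I_N -> R) (delta : estimator) : Prop :=
  forall (s : {set 'I_N}) y y', inTheta a b y -> inTheta a b y' ->
    (forall i, i \in s -> y i = y' i) -> delta s y = delta s y'.

Definition Ep (p : {set 'I_N} -> R) (f : {set 'I_N} -> R) : R :=
  \sum_(s : {set 'I_N}) p s * f s.

Definition unbiased (a b : 'I_N -> R) (p : {set 'I_N} -> R) (delta : estimator) : Prop :=
  forall y, inTheta a b y -> Ep p (fun s => delta s y) = total y.

Definition risk (p : {set 'I_N} -> R) (delta : estimator) (y : 'I_N -> R) : R :=
  Ep p (fun s => (delta s y - total y) ^+ 2).

Definition That (a b : 'I_N -> R) (p : {set 'I_N} -> R) : estimator :=
  fun s y => \sum_i ((a i + b i) / 2)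
           + \sum_(i in s) (y i - (a i + b i) / 2) / incl_prob p i.

End Sampling.

(* Main.v *)
Require Import Defs.
From mathcomp Require Import all_boot all_order all_algebra.
From mathcomp Require Import reals.
From mathcomp Require Import ring lra.
Import Order.TTheory GRing.Theory Num.Theory.
Local Open Scope ring_scope.

Section Proof.
Variables (R : realType) (N : nat) (a b : 'I_N -> R) (p : {set 'I_N} -> R).
Hypothesis hr : forall i, 0 < (b i - a i) / 2.
Hypothesis hd : is_design p.
Hypothesis hpi : forall i, 0 < incl_prob p i.

Let m i := (a i + b i) / 2.
Let D (y : 'I_N -> R) := [set i | y i != m i].

Lemma m_in : inTheta a b m.
Proof. move=> i; have := hr i; rewrite /m => h; apply/andP; split; lra. Qed.

Lemma That_unb y : Ep p (fun s => That a b p s y) = Defs.total y.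
Proof.
rewrite /Ep /That /Defs.total.
under eq_bigr => s _ do rewrite mulrDr.
rewrite big_split /= -mulr_suml hd.2 mul1r.
rewrite (eq_bigr (fun s : {set 'I_N} => \sum_(j < N) (if j \in s then p s * ((y j - (a j + b j) / 2) / incl_prob p j) else 0))); last first.
  by move=> s _; rewrite mulr_sumr big_mkcond.
rewrite exchange_big /=.
have -> : \sum_(j < N) \sum_(i : {set 'I_N}) (if j \in i then p i * ((y j - (a j + b j) / 2) / incl_prob p j) else 0)
   = \sum_(j < N) (y j - (a j + b j) / 2).
  apply: eq_bigr => j _.
  rewrite -big_mkcond /= -mulr_suml -/(incl_prob p j) mulrC divfK //.
  exact: lt0r_neq0 (hpi j).
rewrite sumrB; ring.
Qed.

Lemma That_full y (s : {set 'I_N}) : D y \subset s -> That a b p s y = That a b p setT y.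
Proof.
move=> sub; rewrite /That; congr (_ + _).
rewrite big_mkcond [RHS]big_mkcond /=; apply: eq_bigr => i _.
rewrite in_setT; case: ifP => // nis.
have : i \notin D y by apply/negP => /(subsetP sub); rewrite nis.
rewrite inE negbK => /eqP ->; rewrite /m subrr mul0r //.
Qed.

Variable delta : estimator R N.
Hypothesis hdep : depends_on_sample a b delta.
Hypothesis hunb : unbiased a b p delta.
Hypothesis hle : forall y, inTheta a b y -> risk p delta y <= risk p (That a b p) y.

Definition good y := forall s, p s != 0 -> delta s y = That a b p s y.

Lemma step y : inTheta a b y ->
  (forall y', inTheta a b y' -> (#|D y'| < #|D y|)%N -> good y') -> good y.
Proof.
move=> hy IH.
pose h s := delta s y - That a b p s y.
pose e s := That a b p s y - Defs.total y.
pose C := That a b p setT y - Defs.total y.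
have hz : forall s, p s != 0 -> ~~ (D y \subset s) -> h s = 0.
  move=> s ps nsub.
  pose y' i := if i \in s then y i else m i.
  have hy' : inTheta a b y'.
    move=> i; rewrite /y'; case: ifP => _; [exact: hy | exact: m_in].
  have agree : forall i, i \in s -> y i = y' i by move=> i iS; rewrite /y' iS.
  have Dy' : D y' = D y :&: s.
    apply/setP => i; rewrite !inE /y'; case: (i \in s); rewrite ?andbT ?andbF //.
    by rewrite eqxx.
  have lt : (#|D y'| < #|D y|)%N.
    rewrite Dy'; apply: proper_card; rewrite properEneq subsetIl andbT.
    apply/negP => /eqP E; move: nsub; rewrite -E subsetIr //.
  have := IH y' hy' lt s ps.
  rewrite /h (@hdep s y y' hy hy' agree) => ->.
  rewrite /That; apply/eqP; rewrite subr_eq0; apply/eqP; congr (_ + _).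
  by apply: eq_bigr => i iS; rewrite /y' iS.
have hsum : \sum_s p s * h s * e s = 0.
  transitivity (\sum_s p s * h s * C).
    apply: eq_bigr => s _.
    case: (eqVneq (p s) 0) => [->|ps]; first by rewrite !mul0r.
    case: (boolP (D y \subset s)) => sub.
      by rewrite /e /C (@That_full y s sub).
    by rewrite (hz s ps sub) mulr0 !mul0r.
  rewrite -mulr_suml.
  have -> : \sum_s p s * h s = 0.
    under eq_bigr => s _ do rewrite /h mulrBr.
    rewrite sumrB -/(Ep p _) -/(Ep p _) That_unb (hunb y hy) subrr //.
  by rewrite mul0r.
have hrisk : risk p delta y = risk p (That a b p) y + \sum_s p s * h s ^+ 2.
  rewrite /risk /Ep -big_split /=.
  transitivity (\sum_s (p s * (That a b p s y - Defs.total y) ^+ 2 + p s * h s ^+ 2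
                 + 2 * (p s * h s * e s))).
    by apply: eq_bigr => s _; rewrite /h /e; ring.
  by rewrite big_split /= -mulr_sumr hsum mulr0 addr0.
have h0 : \sum_s p s * h s ^+ 2 = 0.
  apply/le_anti/andP; split.
    have := hle y hy; rewrite hrisk; lra.
  apply: sumr_ge0 => s _; apply: mulr_ge0; [exact: hd.1 | exact: sqr_ge0].
move=> s ps.
have := psumr_eq0P (fun s _ => mulr_ge0 (hd.1 s) (sqr_ge0 (h s))) h0 (i:=s) isT.
move/eqP; rewrite mulf_eq0 (negbTE ps) /= sqrf_eq0 subr_eq0 => /eqP //.
Qed.

Lemma all_good y : inTheta a b y -> good y.
Proof.
move: {2}#|D y| (leqnn #|D y|) => n; elim: n y => [|n IHn] y le hy.
  apply: step => // y' _; rewrite ltnNge (leq_trans le) //.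
apply: step => // y' hy' lt; apply: IHn => //.
by rewrite -ltnS (leq_trans lt).
Qed.

End Proof.

Theorem proposition1 (R : realType) (N : nat) (a b : 'I_N -> R)
  (p : {set 'I_N} -> R) :
  (0 < N)%N ->
  (forall i, 0 < (b i - a i) / 2) ->
  is_design p ->
  (forall i, 0 < incl_prob p i) ->
  ~ (exists delta : estimator R N,
        depends_on_sample a b delta /\
        unbiased a b p delta /\
        (forall y, inTheta a b y -> risk p delta y <= risk p (That a b p) y) /\
        (exists y, inTheta a b y /\ risk p delta y < risk p (That a b p) y)).
Proof.
move=> _ hr hd hpi [delta [hdep [hunb [hle [y [hy hlt]]]]]].
have g := @all_good R N a b p hr hd hpi delta hdep hunb hle y hy.
move: hlt; have -> : risk p delta y = risk p (That a b p) y.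
  rewrite /risk /Ep; apply: eq_bigr => s _.
  case: (eqVneq (p s) 0) => [->|ps]; first by rewrite !mul0r.
  by rewrite g.
by rewrite ltxx.
Qed.
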